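(* Let $\alpha=1/2$, $\rho=1$, $\Omega=\mathbb R$, and assume $\inf l=0$, $\sup l=\infty$. Let $a=\int_{-\infty}^{\infty}\sqrt{f_0(y)f_1(y)}\,dy$. The limiting (maximum) robustness parameters $(\epsilon_0,\epsilon_1)$, i.e. those for which the least favorable distributions coincide ($\hat G_0=\hat G_1$ $\mu$-a.e.), satisfy \[ a=\frac{1}{16}\left(16-4\epsilon_1+\epsilon_0(\epsilon_1-4)-\sqrt{(\epsilon_0-8)\,\epsilon_0\,(\epsilon_1-8)\,\epsilon_1}\right). \] In particular, if $\epsilon_0=\epsilon_1=\epsilon$, the maximum robustness parameter is $\epsilon_{\max}=4-2\sqrt{2(1+a)}$.
   Context: $f_0,f_1$ are distinct nominal probability densities on $\mathbb R$, $l=f_1/f_0$. The $\alpha$-divergence is $D(g,f;\alpha)=\frac{1}{\alpha(1-\alpha)}\big(1-\int g^\alpha f^{1-\alpha}dy\big)$ (for $\alpha=1/2$ this is $4$ times the squared Hellinger distance), uncertainty classes are $\mathcal G_i=\{g_i:D(g_i,f_i;\alpha)\le\epsilon_i\}$, and $\hat G_0,\hat G_1$ denote the least favorable distributions of the minimax Bayes test $\min_\delta\sup_{(g_0,g_1)\in\mathcal G_0\times\mathcal G_1}P_E$ with equal priors. *)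

(* Defs.v *)
From HB Require Import structures.
From mathcomp Require Import all_boot all_order all_algebra.
From mathcomp Require Import all_classical all_reals all_analysis.
Set Implicit Arguments. Unset Strict Implicit. Unset Printing Implicit Defensive.
Import Order.TTheory GRing.Theory Num.Theory.
Import numFieldNormedType.Exports.
Local Open Scope classical_set_scope.
Local Open Scope ring_scope.
Local Open Scope ereal_scope.

Section Defs.
Variable R : realType.
Local Notation mu := (@lebesgue_measure R).

Definition is_density (f : R -> R) : Prop :=
  [/\ measurable_fun [set: R] f, (forall x, (0 <= f x)%R)
    & \int[mu]_x (f x)%:E = 1].

Definition alpha_div (g f : R -> R) (alpha : R) : \bar R :=
  ((alpha * (1 - alpha))^-1)%:E *
    (1 - \int[mu]_x ((g x `^ alpha) * (f x `^ (1 - alpha)))%:E).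

Definition unc_class (f : R -> R) (alpha eps : R) (g : R -> R) : Prop :=
  is_density g /\ alpha_div g f alpha <= eps%:E.

(* (randomized) decision rule: delta y = probability of deciding H1 *)
Definition is_test (delta : R -> R) : Prop :=
  measurable_fun [set: R] delta /\ (forall x, (0 <= delta x <= 1)%R).

Definition err_prob (delta g0 g1 : R -> R) : \bar R :=
  (2^-1)%:E * \int[mu]_x (delta x * g0 x)%:E +
  (2^-1)%:E * \int[mu]_x ((1 - delta x) * g1 x)%:E.

Definition is_LFD (f0 f1 : R -> R) (alpha eps0 eps1 : R) (hg0 hg1 : R -> R) : Prop :=
  [/\ unc_class f0 alpha eps0 hg0, unc_class f1 alpha eps1 hg1 &
    exists hdelta, is_test hdelta /\
      (forall g0 g1, unc_class f0 alpha eps0 g0 -> unc_class f1 alpha eps1 g1 ->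
         err_prob hdelta g0 g1 <= err_prob hdelta hg0 hg1) /\
      (forall delta, is_test delta ->
         err_prob hdelta hg0 hg1 <= err_prob delta hg0 hg1)].

Definition LFDs_coincide (f0 f1 : R -> R) (alpha eps0 eps1 : R) : Prop :=
  exists hg0 hg1, is_LFD f0 f1 alpha eps0 eps1 hg0 hg1 /\
    {ae mu, forall x, hg0 x = hg1 x}.

Definition limiting_params (f0 f1 : R -> R) (alpha eps0 eps1 : R) : Prop :=
  LFDs_coincide f0 f1 alpha eps0 eps1 /\
  forall e0 e1, (0 <= e0 <= eps0)%R -> (0 <= e1 <= eps1)%R ->
    (e0, e1) <> (eps0, eps1) -> ~ LFDs_coincide f0 f1 alpha e0 e1.

End Defs.

(* Main.v *)
Require Import Defs.
From HB Require Import structures.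
From mathcomp Require Import all_boot all_order all_algebra.
From mathcomp Require Import all_classical all_reals all_analysis.
From mathcomp Require Import ring lra measurable_realfun.
Import Order.TTheory GRing.Theory Num.Theory.
Import numFieldNormedType.Exports.
Local Open Scope classical_set_scope.
Local Open Scope ring_scope.


Lemma andP_intro_helper (R : realType) (x y z : R) : x <= y -> y <= z -> x <= y <= z.
Proof. by move=> h1 h2; rewrite h1 h2. Qed.

Section H.
Context {R : realType}.
Local Notation mu := (@lebesgue_measure R).

Definition good (h : R -> R) (r : R) :=
  [/\ (forall x, 0 <= h x), measurable_fun setT h & (\int[mu]_x (h x)%:E = r%:E)%E].

Lemma Lin4 (c1 c2 c3 c4 : R) (h1 h2 h3 h4 : R -> R) (r1 r2 r3 r4 : R) :
  0 <= c1 -> 0 <= c2 -> 0 <= c3 -> 0 <= c4 ->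
  good h1 r1 -> good h2 r2 -> good h3 r3 -> good h4 r4 ->
  good (fun x => c1 * h1 x + c2 * h2 x + c3 * h3 x + c4 * h4 x)
       (c1 * r1 + c2 * r2 + c3 * r3 + c4 * r4).
Proof.
move=> c10 c20 c30 c40 [p1 m1 i1] [p2 m2 i2] [p3 m3 i3] [p4 m4 i4].
have q1 x : 0 <= c1 * h1 x by rewrite mulr_ge0.
have q2 x : 0 <= c2 * h2 x by rewrite mulr_ge0.
have q3 x : 0 <= c3 * h3 x by rewrite mulr_ge0.
have q4 x : 0 <= c4 * h4 x by rewrite mulr_ge0.
have M1 : measurable_fun setT (EFin \o (fun x => c1 * h1 x)).
  by apply/measurable_EFinP; apply: measurable_funM => //; exact: measurable_cst.
have M2 : measurable_fun setT (EFin \o (fun x => c2 * h2 x)).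
  by apply/measurable_EFinP; apply: measurable_funM => //; exact: measurable_cst.
have M3 : measurable_fun setT (EFin \o (fun x => c3 * h3 x)).
  by apply/measurable_EFinP; apply: measurable_funM => //; exact: measurable_cst.
have M4 : measurable_fun setT (EFin \o (fun x => c4 * h4 x)).
  by apply/measurable_EFinP; apply: measurable_funM => //; exact: measurable_cst.
split.
- by move=> x; rewrite !addr_ge0.
- apply: measurable_funD; last by apply: measurable_funM => //; exact: measurable_cst.
  apply: measurable_funD; last by apply: measurable_funM => //; exact: measurable_cst.
  apply: measurable_funD; by apply: measurable_funM => //; exact: measurable_cst.
under eq_integral => x _ do rewrite !EFinD.
rewrite ge0_integralD //; [|by move=> x _; rewrite !adde_ge0 // lee_fin
  | exact: (emeasurable_funD (emeasurable_funD M1 M2) M3) | by move=> x _; rewrite lee_fin].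
rewrite ge0_integralD //; [|by move=> x _; rewrite !adde_ge0 // lee_fin
  | exact: (emeasurable_funD M1 M2) | by move=> x _; rewrite lee_fin].
rewrite ge0_integralD //; try by move=> x _; rewrite lee_fin.
under eq_integral => x _ do rewrite EFinM.
under [X in (_ + X)%E]eq_integral => x _ do rewrite EFinM.
under [X in (_ + X + _)%E]eq_integral => x _ do rewrite EFinM.
under [X in (_ + X + _ + _)%E]eq_integral => x _ do rewrite EFinM.
rewrite !ge0_integralZl_EFin //; try by move=> x _; rewrite lee_fin.
all: try by apply/measurable_EFinP.
by rewrite i1 i2 i3 i4 -!EFinM -!EFinD.
Qed.



Lemma good_ext (h k : R -> R) r : (forall x, h x = k x) -> good h r -> good k r.
Proof. by move=> e; have -> : h = k by apply/funext. Qed.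

Lemma good_le (h k : R -> R) r s : good h r -> good k s -> (forall x, h x <= k x) -> r <= s.
Proof.
move=> [p1 m1 i1] [p2 m2 i2] le; rewrite -lee_fin -i1 -i2.
apply: ge0_le_integral => //.
- by move=> x _; rewrite lee_fin.
- exact/measurable_EFinP.
- exact/measurable_EFinP.
- by move=> x _; rewrite lee_fin.
Qed.

Lemma good_density (f : R -> R) : is_density f -> good f 1.
Proof. by case=> m p i; split. Qed.

Lemma good_ge0 (h : R -> R) r : good h r -> 0 <= r.
Proof.
move=> [p m i]; rewrite -lee_fin -i; apply: integral_ge0 => x _; rewrite lee_fin.
exact: p.
Qed.

Definition SP (h k : R -> R) x := Num.sqrt (h x) * Num.sqrt (k x).

Lemma measurable_sqrt (h : R -> R) : measurable_fun setT h ->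
  measurable_fun setT (fun x => Num.sqrt (h x)).
Proof.
move=> mh.
have ms : measurable_fun setT (@Num.sqrt R).
  apply: continuous_measurable_fun; exact: sqrt_continuous.
exact: (measurableT_comp ms mh).
Qed.

Lemma SP_bound (h k : R -> R) x : 0 <= h x -> 0 <= k x ->
  SP h k x <= 2^-1 * h x + 2^-1 * k x + 0 * h x + 0 * h x.
Proof.
move=> h0 k0; rewrite /SP !mul0r !addr0.
have e1 := sqr_sqrtr h0; have e2 := sqr_sqrtr k0.
set a := Num.sqrt (h x) in e1 *; set b := Num.sqrt (k x) in e2 *.
rewrite -e1 -e2; have := sqr_ge0 (a - b); nra.
Qed.

Lemma good_SP (h k : R -> R) : is_density h -> is_density k ->
  exists r, good (SP h k) r /\ 0 <= r <= 1.
Proof.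
move=> dh dk.
have [p1 m1 _] := dh; have [p2 m2 _] := dk.
have G := Lin4 (2^-1) (2^-1) 0 0 h k h h 1 1 1 1 ltac:(by rewrite invr_ge0) ltac:(by rewrite invr_ge0) (lexx _) (lexx _)
   (good_density h dh) (good_density k dk) (good_density h dh) (good_density h dh).
have pS x : 0 <= SP h k x by rewrite /SP mulr_ge0 // sqrtr_ge0.
have mS : measurable_fun setT (SP h k).
  by apply: measurable_funM; apply: measurable_sqrt.
set I := (\int[mu]_x (SP h k x)%:E)%E.
have I0 : (0 <= I)%E by apply: integral_ge0 => x _; rewrite lee_fin.
have I1 : (I <= 1%:E)%E.
  have [_ _ iG] := G.
  have -> : 1 = 2^-1 * 1 + 2^-1 * 1 + 0 * 1 + 0 * 1 :> R.
    by rewrite !mul0r !addr0 !mulr1; field.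
  rewrite -iG; apply: ge0_le_integral => //.
  - by move=> x _; rewrite lee_fin.
  - exact/measurable_EFinP.
  - by have [_ mG _] := G; exact/measurable_EFinP.
  - by move=> x _; rewrite lee_fin; apply: SP_bound.
have fI : I \is a fin_num by rewrite ge0_fin_numE //; exact: le_lt_trans I1 (ltry _).
exists (fine I); split; first by split => //; rewrite fineK.
by apply/andP; split; [exact: fine_ge0 | rewrite -lee_fin fineK].
Qed.

Lemma alpha_divE (g f : R -> R) r : is_density g -> is_density f -> good (SP g f) r ->
  alpha_div g f (2^-1) = (4 * (1 - r))%:E.
Proof.
move=> [_ pg _] [_ pf _] [_ _ i].
rewrite /alpha_div.
have -> : (1 - 2^-1 = 2^-1 :> R) by field.
under eq_integral => x _ do rewrite !powR12_sqrt //.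
rewrite i -EFinB -EFinM; congr (_%:E); field; by [].
Qed.

Lemma err_half (g0 g1 : R -> R) : is_density g0 -> is_density g1 ->
  err_prob (fun _ => 2^-1) g0 g1 = (2^-1)%:E.
Proof.
move=> [m0 p0 i0] [m1 p1 i1]; rewrite /err_prob.
have -> : (1 - 2^-1 = 2^-1 :> R) by field.
under eq_integral => x _ do rewrite EFinM.
under [X in (_ + _ * X)%E]eq_integral => x _ do rewrite EFinM.
rewrite !ge0_integralZl_EFin //; try by move=> x _; rewrite lee_fin.
all: try by apply/measurable_EFinP.
by rewrite i0 i1 !mule1 -!EFinM -EFinD; congr (_%:E); field.
Qed.

Lemma err_ge (delta g : R -> R) : is_test delta -> is_density g ->
  ((2^-1)%:E <= err_prob delta g g)%E.
Proof.
move=> [md pd] [mg pg ig]; rewrite /err_prob.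
have q1 x : 0 <= delta x * g x by have /andP[] := pd x; move=> *; rewrite mulr_ge0.
have q2 x : 0 <= (1 - delta x) * g x.
  by have /andP[_ h] := pd x; rewrite mulr_ge0 // subr_ge0.
have m1 : measurable_fun setT (fun x => delta x * g x) by apply: measurable_funM.
have m2 : measurable_fun setT (fun x => (1 - delta x) * g x).
  apply: measurable_funM => //; apply: measurable_funB => //; exact: measurable_cst.
rewrite -ge0_muleDr; try by apply: integral_ge0 => x _; rewrite lee_fin.
rewrite -ge0_integralD //; try by move=> x _; rewrite lee_fin.
2,3: exact/measurable_EFinP.
under eq_integral => x _ do rewrite -EFinD -mulrDl addrCA subrr addr0 mul1r.
by rewrite ig mule1.
Qed.

Lemma feas (f0 f1 g : R -> R) r0 r1 : is_density f0 -> is_density f1 -> is_density g ->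
  good (SP g f0) r0 -> good (SP g f1) r1 ->
  LFDs_coincide f0 f1 (2^-1) (4 * (1 - r0)) (4 * (1 - r1)).
Proof.
move=> d0 d1 dg G0 G1.
have u0 : unc_class f0 (2^-1) (4 * (1 - r0)) g by split => //; rewrite (alpha_divE _ _ _ dg d0 G0).
have u1 : unc_class f1 (2^-1) (4 * (1 - r1)) g by split => //; rewrite (alpha_divE _ _ _ dg d1 G1).
exists g, g; split; last by apply: aeW.
split => //; exists (fun _ => 2^-1); split; [split|split].
- exact: measurable_cst.
- by move=> x; rewrite invr_ge0 ler0n /= invf_le1 // ler1n.
- move=> h0 h1 [dh0 _] [dh1 _]; rewrite !err_half //.
- move=> delta td; rewrite err_half //; exact: err_ge.
Qed.

Lemma good_SP_self (h : R -> R) : is_density h -> good (SP h h) 1.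
Proof.
move=> dh; have [_ ph _] := dh; apply: (good_ext h); last exact: good_density.
by move=> x; rewrite /SP -expr2 sqr_sqrtr.
Qed.

Lemma pw_ineq (u0 u1 v A0 A1 t : R) : 0 < t ->
  (A1 + t * A0) * (v * u0) + (A0 + A1 / t) * (v * u1) + 0 * v ^+ 2 + 0 * v ^+ 2 <=
  1 * (u0 * u1) + (A0 * A1 + t * A0 ^+ 2 / 2 + A1 ^+ 2 / (2 * t)) * v ^+ 2
  + t / 2 * u0 ^+ 2 + 1 / (2 * t) * u1 ^+ 2.
Proof.
move=> t0; rewrite -subr_ge0.
have tn : t != 0 by rewrite gt_eqF.
have -> : 1 * (u0 * u1) + (A0 * A1 + t * A0 ^+ 2 / 2 + A1 ^+ 2 / (2 * t)) * v ^+ 2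
  + t / 2 * u0 ^+ 2 + 1 / (2 * t) * u1 ^+ 2 -
  ((A1 + t * A0) * (v * u0) + (A0 + A1 / t) * (v * u1) + 0 * v ^+ 2 + 0 * v ^+ 2)
  = (t * (u0 - A0 * v) + (u1 - A1 * v)) ^+ 2 / (2 * t) by field.
by rewrite divr_ge0 ?sqr_ge0 // mulr_ge0 // ltW.
Qed.

Lemma stepL_int (f0 f1 g : R -> R) A0 A1 a t :
  is_density f0 -> is_density f1 -> is_density g ->
  good (SP g f0) A0 -> good (SP g f1) A1 -> good (SP f0 f1) a ->
  0 <= A0 -> 0 <= A1 -> 0 < t ->
  A0 * A1 - t * (1 - A0 ^+ 2) / 2 - (1 - A1 ^+ 2) / (2 * t) <= a.
Proof.
move=> d0 d1 dg G0 G1 Ga A00 A10 t0.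
have tn : t != 0 by rewrite gt_eqF.
have [_ p0 _] := d0; have [_ p1 _] := d1; have [_ pg _] := dg.
have t2 : 0 <= t / 2 by rewrite divr_ge0 // ltW.
have t2' : 0 <= 1 / (2 * t) by rewrite divr_ge0 // mulr_ge0 // ltW.
have K0 : 0 <= A0 * A1 + t * A0 ^+ 2 / 2 + A1 ^+ 2 / (2 * t).
  have a1 : 0 <= A0 * A1 by rewrite mulr_ge0.
  have a2 : 0 <= t * A0 ^+ 2 / 2 by rewrite divr_ge0 // mulr_ge0 ?sqr_ge0 // ltW.
  have a3 : 0 <= A1 ^+ 2 / (2 * t) by rewrite divr_ge0 ?sqr_ge0 // mulr_ge0 // ltW.
  by rewrite !addr_ge0.
have L := Lin4 _ _ _ _ _ _ _ _ _ _ _ _ ler01 K0 t2 t2' Ga (good_density g dg)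
   (good_density f0 d0) (good_density f1 d1).
have d10 : 0 <= A1 + t * A0 by rewrite addr_ge0 // mulr_ge0 // ltW.
have d20 : 0 <= A0 + A1 / t by rewrite addr_ge0 // divr_ge0 // ltW.
have Rr := Lin4 _ _ _ _ _ _ _ _ _ _ _ _ d10 d20 (lexx 0) (lexx 0) G0 G1
   (good_density g dg) (good_density g dg).
have := good_le _ _ _ _ Rr L.
have /(_ _) H : forall x, (A1 + t * A0) * SP g f0 x + (A0 + A1 / t) * SP g f1 x + 0 * g x + 0 * g x <=
   1 * SP f0 f1 x + (A0 * A1 + t * A0 ^+ 2 / 2 + A1 ^+ 2 / (2 * t)) * g x +
   t / 2 * f0 x + 1 / (2 * t) * f1 x.
  move=> x; have e0 := sqr_sqrtr (p0 x); have e1 := sqr_sqrtr (p1 x);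
  have eg := sqr_sqrtr (pg x); rewrite /SP.
  set u0 := Num.sqrt (f0 x) in e0 *; set u1 := Num.sqrt (f1 x) in e1 *.
  set v := Num.sqrt (g x) in eg *.
  rewrite -e0 -e1 -eg; exact: pw_ineq.
move=> /(_ H) {H} H.
rewrite -subr_ge0; rewrite -subr_ge0 in H.
suff -> : a - (A0 * A1 - t * (1 - A0 ^+ 2) / 2 - (1 - A1 ^+ 2) / (2 * t)) =
  1 * a + (A0 * A1 + t * A0 ^+ 2 / 2 + A1 ^+ 2 / (2 * t)) * 1 + t / 2 * 1 + 1 / (2 * t) * 1 -
  ((A1 + t * A0) * A0 + (A0 + A1 / t) * A1 + 0 * 1 + 0 * 1) by [].
by field.
Qed.

Lemma good_val (h : R -> R) r s : r = s -> good h r -> good h s.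
Proof. by move=> ->. Qed.

Lemma geo (f0 f1 : R -> R) ar p q : is_density f0 -> is_density f1 ->
  good (SP f0 f1) ar -> 0 <= p -> 0 <= q -> p ^+ 2 + q ^+ 2 + 2 * p * q * ar = 1 ->
  exists g, [/\ is_density g, good (SP g f0) (p + q * ar) & good (SP g f1) (p * ar + q)].
Proof.
move=> d0 d1 Ga p0 q0 e.
have [_ pf0 _] := d0; have [_ pf1 _] := d1.
set g := fun x => p ^+ 2 * f0 x + q ^+ 2 * f1 x + (2 * p * q) * SP f0 f1 x + 0 * f0 x.
have Gg : good g 1.
  apply: good_val (Lin4 _ _ _ _ _ _ _ _ _ _ _ _ (sqr_ge0 p) (sqr_ge0 q) _ (lexx 0)
     (good_density f0 d0) (good_density f1 d1) Ga (good_density f0 d0)).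
    by rewrite !mulr1 addr0.
  by rewrite !mulr_ge0.
have sg x : Num.sqrt (g x) = p * Num.sqrt (f0 x) + q * Num.sqrt (f1 x).
  rewrite /g /SP.
  have e0 := sqr_sqrtr (pf0 x); have e1 := sqr_sqrtr (pf1 x).
  set u0 := Num.sqrt (f0 x) in e0 *; set u1 := Num.sqrt (f1 x) in e1 *.
  rewrite -e0 -e1.
  have -> : p ^+ 2 * u0 ^+ 2 + q ^+ 2 * u1 ^+ 2 + 2 * p * q * (u0 * u1) + 0 * u0 ^+ 2
    = (p * u0 + q * u1) ^+ 2 by ring.
  by rewrite sqrtr_sqr ger0_norm // addr_ge0 // mulr_ge0 // sqrtr_ge0.
have [pg mg ig] := Gg.
exists g; split.
- by split.
- apply: (good_ext (fun x => p * f0 x + q * SP f0 f1 x + 0 * f0 x + 0 * f0 x)).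
    move=> x; rewrite /SP sg; have e0 := sqr_sqrtr (pf0 x).
    set u0 := Num.sqrt (f0 x) in e0 *; rewrite -e0; ring.
  apply: good_val (Lin4 _ _ _ _ _ _ _ _ _ _ _ _ p0 q0 (lexx 0) (lexx 0)
     (good_density f0 d0) Ga (good_density f0 d0) (good_density f0 d0)); ring.
- apply: (good_ext (fun x => p * SP f0 f1 x + q * f1 x + 0 * f0 x + 0 * f0 x)).
    move=> x; rewrite /SP sg; have e1 := sqr_sqrtr (pf1 x).
    set u1 := Num.sqrt (f1 x) in e1 *; rewrite -e1; ring.
  apply: good_val (Lin4 _ _ _ _ _ _ _ _ _ _ _ _ p0 q0 (lexx 0) (lexx 0)
     Ga (good_density f1 d1) (good_density f0 d0) (good_density f0 d0)); ring.
Qed.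

Lemma good_unique (h : R -> R) r s : good h r -> good h s -> r = s.
Proof. by move=> [_ _ i1] [_ _ i2]; move: i1; rewrite i2 => -[]. Qed.

Lemma stepL_alg (A0 A1 a : R) : 0 <= A0 <= 1 -> 0 <= A1 <= 1 ->
  (forall t, 0 < t -> A0 * A1 - t * (1 - A0 ^+ 2) / 2 - (1 - A1 ^+ 2) / (2 * t) <= a) ->
  A0 * A1 - Num.sqrt (1 - A0 ^+ 2) * Num.sqrt (1 - A1 ^+ 2) <= a.
Proof.
move=> /andP[a00 a01] /andP[a10 a11] H.
have q0 : 0 <= 1 - A0 ^+ 2 by rewrite subr_ge0 expr_le1.
have q1 : 0 <= 1 - A1 ^+ 2 by rewrite subr_ge0 expr_le1.
have e0 := sqr_sqrtr q0; have e1 := sqr_sqrtr q1.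
have g0 := sqrtr_ge0 (1 - A0 ^+ 2); have g1 := sqrtr_ge0 (1 - A1 ^+ 2).
set s0 := Num.sqrt (1 - A0 ^+ 2) in e0 g0 *.
set s1 := Num.sqrt (1 - A1 ^+ 2) in e1 g1 *.
rewrite -e0 -e1 in H.
have [s0z|s0p] := eqVneq s0 0.
  rewrite s0z mul0r subr0; rewrite leNgt; apply/negP => ha.
  set d := A0 * A1 - a.
  have dp : 0 < d by rewrite subr_gt0.
  have tp : 0 < (s1 ^+ 2 + 1) / d by rewrite divr_gt0 // ltr_pwDr // sqr_ge0.
  have := H _ tp; rewrite s0z expr0n /= mulr0 mul0r subr0.
  have -> : s1 ^+ 2 / (2 * ((s1 ^+ 2 + 1) / d)) = d * (s1 ^+ 2 / (2 * (s1 ^+ 2 + 1))).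
    field; rewrite gt_eqF // ?ltr_pwDr ?sqr_ge0 //; by rewrite lt0r_neq0.
  have : s1 ^+ 2 / (2 * (s1 ^+ 2 + 1)) < 1.
    rewrite ltr_pdivrMr ?mul1r; last by rewrite mulr_gt0 // ltr_pwDr // sqr_ge0.
    have := sqr_ge0 s1; lra.
  move=> h1 h2.
  have : d * (s1 ^+ 2 / (2 * (s1 ^+ 2 + 1))) < d by rewrite gtr_pMr.
  rewrite /d in h2 *; lra.
have [s1z|s1p] := eqVneq s1 0.
  rewrite s1z mulr0 subr0; rewrite leNgt; apply/negP => ha.
  set d := A0 * A1 - a.
  have dp : 0 < d by rewrite subr_gt0.
  have s0g : 0 < s0 ^+ 2 by rewrite exprn_gt0 // lt0r s0p.
  have tp : 0 < d / s0 ^+ 2 by rewrite divr_gt0.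
  have := H _ tp; rewrite s1z expr0n /= mul0r subr0.
  have -> : d / s0 ^+ 2 * s0 ^+ 2 / 2 = d / 2 by field.
  rewrite /d; lra.
have s0q : 0 < s0 by rewrite lt0r s0p.
have s1q : 0 < s1 by rewrite lt0r s1p.
have := H (s1 / s0) (divr_gt0 s1q s0q).
have -> : A0 * A1 - s1 / s0 * s0 ^+ 2 / 2 - s1 ^+ 2 / (2 * (s1 / s0)) = A0 * A1 - s0 * s1.
  by field; rewrite s0p s1p.
by [].
Qed.

Lemma geo_alg (A0 A1 ar : R) : 0 <= A0 <= 1 -> 0 <= A1 <= 1 -> 0 <= ar -> ar <= A1 ->
  ar < 1 -> A0 * A1 - Num.sqrt (1 - A0 ^+ 2) * Num.sqrt (1 - A1 ^+ 2) < ar ->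
  exists p q : R, [/\ 0 <= p, 0 <= q, p ^+ 2 + q ^+ 2 + 2 * p * q * ar = 1,
     A0 < p + q * ar & p * ar + q = A1].
Proof.
move=> /andP[a00 a01] /andP[a10 a11] ar0 arA1 ar1 H.
have q0 : 0 <= 1 - A0 ^+ 2 by rewrite subr_ge0 expr_le1.
have q1 : 0 <= 1 - A1 ^+ 2 by rewrite subr_ge0 expr_le1.
have qa : 0 < 1 - ar ^+ 2 by rewrite subr_gt0 expr_lt1.
have e0 := sqr_sqrtr q0; have e1 := sqr_sqrtr q1; have ea := sqr_sqrtr (ltW qa).
have g0 := sqrtr_ge0 (1 - A0 ^+ 2); have g1 := sqrtr_ge0 (1 - A1 ^+ 2).
have ga : 0 < Num.sqrt (1 - ar ^+ 2) by rewrite sqrtr_gt0.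
set s0 := Num.sqrt (1 - A0 ^+ 2) in e0 g0 H *.
set s1 := Num.sqrt (1 - A1 ^+ 2) in e1 g1 H *.
set sg := Num.sqrt (1 - ar ^+ 2) in ea ga *.
have sgn : sg != 0 by rewrite gt_eqF.
set p := s1 / sg.
have psg : p * sg = s1 by rewrite /p divfK.
have p0 : 0 <= p by rewrite divr_ge0 // ltW.
have Y0 : ar * s1 <= sg * A1.
  rewrite leNgt; apply/negP => h.
  have h2 : (sg * A1) ^+ 2 < (ar * s1) ^+ 2.
    by rewrite ltr_pXn2r // ?nnegrE ?mulr_ge0 // ltW.
  move: h2; rewrite !exprMn ea e1; nra.
exists p, (A1 - ar * p); split => //.
- rewrite subr_ge0 /p mulrA ler_pdivrMr //; lra.
- have E : p ^+ 2 + (A1 - ar * p) ^+ 2 + 2 * p * (A1 - ar * p) * ar - 1 =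
      p ^+ 2 * ((1 - ar ^+ 2) - sg ^+ 2) + ((p * sg) ^+ 2 - s1 ^+ 2)
      + (s1 ^+ 2 - (1 - A1 ^+ 2)) by ring.
  apply/eqP; rewrite -subr_eq0; apply/eqP; rewrite E ea psg e1; ring.
- set X := p + (A1 - ar * p) * ar.
  have EX : X = s1 * sg + ar * A1.
    rewrite /X -psg; have : sg ^+ 2 = 1 - ar ^+ 2 by []; nra.
  set Y := sg * A1 - ar * s1.
  have Y0' : 0 <= Y by rewrite subr_ge0.
  have XY : X ^+ 2 + Y ^+ 2 = 1.
    rewrite EX /Y; have : sg ^+ 2 = 1 - ar ^+ 2 by [].
    have : s1 ^+ 2 = 1 - A1 ^+ 2 by []. nra.
  have arE : ar = X * A1 - Y * s1.
    rewrite EX /Y; have : s1 ^+ 2 = 1 - A1 ^+ 2 by []. nra.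
  have X0 : 0 <= X by rewrite EX addr_ge0 // mulr_ge0 // ltW.
  rewrite ltNge; apply/negP => hX.
  have Ys0 : s0 <= Y.
    rewrite leNgt; apply/negP => h.
    have : Y ^+ 2 < s0 ^+ 2 by rewrite ltr_pXn2r.
    have : X ^+ 2 <= A0 ^+ 2 by rewrite ler_pXn2r.
    rewrite e0; lra.
  have : X * A1 - Y * s1 <= A0 * A1 - s0 * s1.
    have : X * A1 <= A0 * A1 by rewrite ler_wpM2r.
    have : s0 * s1 <= Y * s1 by rewrite ler_wpM2r.
    lra.
  rewrite -arE; lra.
- rewrite /p; ring.
Qed.
End H.

Theorem mainTheorem3 (R : realType) (f0 f1 : R -> R) (eps0 eps1 : R) :
  is_density f0 -> is_density f1 ->
  ~ {ae (@lebesgue_measure R), forall x, f0 x = f1 x} ->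
  (* ess inf l = 0, where l = f1 / f0 *)
  (forall c : R, 0 < c ->
     (0 < (@lebesgue_measure R) [set y | (f1 y < c * f0 y)%R])%E) ->
  (* ess sup l = +oo *)
  (forall c : R, 0 < c ->
     (0 < (@lebesgue_measure R) [set y | (c * f0 y < f1 y)%R])%E) ->
  0 <= eps0 -> 0 <= eps1 ->
  limiting_params f0 f1 (2^-1) eps0 eps1 ->
  let a := (\int[@lebesgue_measure R]_y (Num.sqrt (f0 y * f1 y))%:E)%E in
  a = ((16^-1 * (16 - 4 * eps1 + eps0 * (eps1 - 4)
          - Num.sqrt ((eps0 - 8) * eps0 * (eps1 - 8) * eps1)))%:E)%E /\
  (eps0 = eps1 -> eps0 = 4 - 2 * Num.sqrt (2 * (1 + fine a))).
Proof.
move=> d0 d1 _ _ _ e00 e10 [[hg0 [hg1 [[[dh0 D0] [dh1 D1] _] ae]]] Hmin] a.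
have [A0 [G0 /andP[A00 A01]]] := @good_SP R hg0 f0 dh0 d0.
have [A1 [G1 /andP[A10 A11]]] := @good_SP R hg1 f1 dh1 d1.
have [ar [Ga /andP[ar0 ar1]]] := @good_SP R f0 f1 d0 d1.
have [_ pf0 _] := d0; have [_ pf1 _] := d1.
have [_ ph0 _] := dh0; have [mh1 ph1 _] := dh1.
have G1' : good (SP hg0 f1) A1.
  have [p m i] := G1; split.
  - by move=> x; rewrite /SP mulr_ge0 // sqrtr_ge0.
  - by apply: measurable_funM; apply: measurable_sqrt; [by case: dh0|by case: d1].
  - rewrite -i; apply: ae_eq_integral => //.
    + apply/measurable_EFinP; apply: measurable_funM; apply: measurable_sqrt;
        [by case: dh0|by case: d1].
    + exact/measurable_EFinP.
    + have FF := ae_filter_ringOfSetsType (@lebesgue_measure R).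
      by move: ae; apply: filterS => x e _; rewrite /SP e.
rewrite (@alpha_divE R _ _ _ dh0 d0 G0) lee_fin in D0.
rewrite (@alpha_divE R _ _ _ dh1 d1 G1) lee_fin in D1.
have F := @feas R f0 f1 hg0 A0 A1 d0 d1 dh0 G0 G1'.
have [E0 E1] : eps0 = 4 * (1 - A0) /\ eps1 = 4 * (1 - A1).
  case: (eqVneq (4 * (1 - A0), 4 * (1 - A1)) (eps0, eps1)) => [[-> ->]//|ne].
  exfalso; apply: (Hmin _ _ _ _ _ F).
  - by apply/andP; split => //; lra.
  - by apply/andP; split => //; lra.
  - by apply/eqP.
have Min : forall r0 r1 g, is_density g -> good (SP g f0) r0 -> good (SP g f1) r1 ->
    r0 <= 1 -> r1 <= 1 -> A0 <= r0 -> A1 <= r1 -> r0 = A0 /\ r1 = A1.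
  move=> r0 r1 g dg Gr0 Gr1 r01 r11 ar0' ar1'.
  have F' := @feas R f0 f1 g r0 r1 d0 d1 dg Gr0 Gr1.
  case: (eqVneq (4 * (1 - r0), 4 * (1 - r1)) (eps0, eps1)) => [[h0 h1]|ne].
    by split; lra.
  exfalso; apply: (Hmin _ _ _ _ _ F').
  - by apply/andP; split; lra.
  - by apply/andP; split; lra.
  - by apply/eqP.
have L : A0 * A1 - Num.sqrt (1 - A0 ^+ 2) * Num.sqrt (1 - A1 ^+ 2) <= ar.
  apply: stepL_alg; [by rewrite A00 A01|by rewrite A10 A11|].
  by move=> t tp; apply: (@stepL_int R f0 f1 hg0).
have U : ar <= A0 * A1 - Num.sqrt (1 - A0 ^+ 2) * Num.sqrt (1 - A1 ^+ 2).
  rewrite leNgt; apply/negP => H.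
  case: (ltrP A1 ar) => hA.
    have [_ r1e] := Min 1 ar f0 d0 (@good_SP_self R f0 d0) Ga (lexx 1) ar1 A01 (ltW hA).
    by move: hA; rewrite r1e ltxx.
  case: (eqVneq ar 1) => har.
    have [r0e r1e] := Min 1 ar f0 d0 (@good_SP_self R f0 d0) Ga (lexx 1) ar1 A01 ltac:(by rewrite har).
    move: H; rewrite -r0e -r1e har expr1n subrr sqrtr0 mul0r subr0 mulr1 ltxx //.
  have ar1' : ar < 1 by rewrite lt_neqAle har.
  have [p [q [p0 q0 e lt eq]]] := @geo_alg R A0 A1 ar ltac:(by rewrite A00 A01)
     ltac:(by rewrite A10 A11) ar0 hA ar1' H.
  have [g' [dg Gg0 Gg1]] := @geo R f0 f1 ar p q d0 d1 Ga p0 q0 e.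
  have [r0' [Gr0 /andP[_ r01]]] := @good_SP R g' f0 dg d0.
  have r01' : p + q * ar <= 1 by rewrite (good_unique _ _ _ Gg0 Gr0).
  have r11 : p * ar + q <= 1 by rewrite eq.
  have r12 : A1 <= p * ar + q by rewrite eq.
  have [r0e _] := Min _ _ g' dg Gg0 Gg1 r01' r11 (ltW lt) r12.
  by move: lt; rewrite r0e ltxx.
have key : ar = A0 * A1 - Num.sqrt (1 - A0 ^+ 2) * Num.sqrt (1 - A1 ^+ 2).
  by apply/eqP; rewrite eq_le L U.
have aE : a = ar%:E.
  have [_ _ i] := Ga; rewrite -i /a.
  by apply: eq_integral => x _; rewrite sqrtrM.
have q0 : 0 <= 1 - A0 ^+ 2 by rewrite subr_ge0 expr_le1.
have q1 : 0 <= 1 - A1 ^+ 2 by rewrite subr_ge0 expr_le1.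
rewrite aE /=; split.
  congr (_%:E).
  have -> : (eps0 - 8) * eps0 * (eps1 - 8) * eps1 = 16 ^+ 2 * ((1 - A0 ^+ 2) * (1 - A1 ^+ 2)).
    by rewrite E0 E1; ring.
  rewrite sqrtrM ?sqr_ge0 // sqrtr_sqr ger0_norm // sqrtrM // key E0 E1; field; by [].
move=> e01.
have AA : A0 = A1 by move: e01; rewrite E0 E1; lra.
rewrite key -AA -!expr2 sqr_sqrtr // E0.
have -> : 2 * (1 + (A0 ^+ 2 - (1 - A0 ^+ 2))) = (2 * A0) ^+ 2 by ring.
rewrite sqrtr_sqr ger0_norm ?mulr_ge0 //; ring.
Qed.
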